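(* Let $\xi>0$ be such that $D^TD-\xi^2I$ is nonsingular. Then $\lambda\in\mathbb{C}$ is an eigenvalue of the operator $\mathcal{L}_{\xi}$ if and only if $-\bar{\lambda}$ is an eigenvalue of $\mathcal{L}_{\xi}$.
   Context: Let $n,m,n_u,n_y$ be positive integers, $A_0,\dots,A_m\in\mathbb{R}^{n\times n}$, $B\in\mathbb{R}^{n\times n_u}$, $C\in\mathbb{R}^{n_y\times n}$, $D\in\mathbb{R}^{n_y\times n_u}$, delays $\tau_1,\dots,\tau_m\geq0$, $\tau_{\max}=\max_i\tau_i$. For $\xi>0$ put $D_\xi=D^TD-\xi^2I_{n_u}$, $\tilde D_\xi=DD^T-\xi^2I_{n_y}$. Define $2n\times2n$ matrices $M_0=\begin{bmatrix} A_0-BD_\xi^{-1}D^TC & -BD_\xi^{-1}B^T\\ \xi^2 C^T\tilde D_\xi^{-1}C & -A_0^T+C^TDD_\xi^{-1}B^T\end{bmatrix}$, $M_i=\begin{bmatrix}A_i&0\\0&0\end{bmatrix}$, $M_{-i}=\begin{bmatrix}0&0\\0&-A_i^T\end{bmatrix}$, $1\le i\le m$. Let $X=\mathcal{C}([-\tau_{\max},\tau_{\max}],\mathbb{C}^{2n})$. The operator $\mathcal{L}_\xi$ on $X$ has domain $\{\phi\in X:\phi'\in X,\ \phi'(0)=M_0\phi(0)+\sum_{i=1}^m(M_i\phi(-\tau_i)+M_{-i}\phi(\tau_i))\}$ and $\mathcal{L}_\xi\phi=\phi'$. An eigenvalue is $\lambda\in\mathbb{C}$ such that $\mathcal{L}_\xi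 u=\lambda u$ for some nonzero $u$ in the domain. *)

(* Defs.v *)
From HB Require Import structures.
From mathcomp Require Import all_boot all_order all_algebra.
From mathcomp Require Import all_classical all_reals.
From mathcomp Require Import topology normedtype.
From mathcomp Require Import complex.
Set Implicit Arguments. Unset Strict Implicit. Unset Printing Implicit Defensive.
Import Order.TTheory GRing.Theory Num.Theory.
Import numFieldTopology.Exports numFieldNormedType.Exports.
Local Open Scope ring_scope.
Local Open Scope classical_set_scope.

(* Topology on the complex numbers R[i] (R : rcfType), copied from its canonical
   numField topology (R[i])^o, so that 'cV[R[i]]_k gets its product topology. *)
HB.instance Definition _ (R : rcfType) :=
  PseudoPointedMetric.copy (complex R) (complex R)^o.

Section Defs.
Variable R : realType.
Local Notation C := (complex R).

Definition Dxi (nu ny : nat) (D : 'M[R]_(ny, nu)) (xi : R) : 'M[R]_nu :=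
  D^T *m D - (xi ^+ 2)%:M.
Definition Dtilxi (nu ny : nat) (D : 'M[R]_(ny, nu)) (xi : R) : 'M[R]_ny :=
  D *m D^T - (xi ^+ 2)%:M.

Definition M0 (n nu ny : nat) (A0 : 'M[R]_n) (B : 'M[R]_(n, nu))
  (Cm : 'M[R]_(ny, n)) (D : 'M[R]_(ny, nu)) (xi : R) : 'M[R]_(n + n) :=
  let Di := invmx (Dxi D xi) in
  let Dti := invmx (Dtilxi D xi) in
  block_mx (A0 - B *m Di *m D^T *m Cm) (- (B *m Di *m B^T))
           ((xi ^+ 2) *: (Cm^T *m Dti *m Cm)) (- A0^T + Cm^T *m D *m Di *m B^T).

Definition Mpos (n : nat) (Ai : 'M[R]_n) : 'M[R]_(n + n) := block_mx Ai 0 0 0.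
Definition Mneg (n : nat) (Ai : 'M[R]_n) : 'M[R]_(n + n) := block_mx 0 0 0 (- Ai^T).

Definition cmx (p q : nat) (M : 'M[R]_(p, q)) : 'M[C]_(p, q) :=
  map_mx (fun x : R => x%:C%C) M.

(* tau_max = max_i tau_i (the tau_i are nonnegative) *)
Definition taumax (m : nat) (tau : 'I_m -> R) : R := \big[Num.max/0]_(i < m) tau i.

Definition has_deriv_on (V : normedModType C) (a b : R) (phi psi : R -> V) :=
  forall t, t \in `[a, b] ->
    (fun s : R => ((s - t)^-1)%:C%C *: (phi s - phi t))
      @ within [set s | s \in `[a, b]] (nbhs t^') --> psi t.

(* lambda is an eigenvalue of the operator L_xi on X = C([-tau_max,tau_max], C^{2n}):
   there is u in the domain (u continuous, u' exists and continuous, boundary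
   condition) with u' = lambda u and u nonzero in X. *)
Definition is_eigenvalue (n m nu ny : nat) (A0 : 'M[R]_n) (A : 'I_m -> 'M[R]_n)
  (B : 'M[R]_(n, nu)) (Cm : 'M[R]_(ny, n)) (D : 'M[R]_(ny, nu))
  (tau : 'I_m -> R) (xi : R) (lambda : C) : Prop :=
  let T := taumax tau in
  exists (u u' : R -> 'cV[C]_(n + n)),
    {within [set s | s \in `[- T, T]], continuous u} /\
    {within [set s | s \in `[- T, T]], continuous u'} /\
    has_deriv_on (- T) T u u' /\
    u' 0 = cmx (M0 A0 B Cm D xi) *m u 0
           + \sum_(i < m) (cmx (Mpos (A i)) *m u (- tau i)
                           + cmx (Mneg (A i)) *m u (tau i)) /\
    (forall t, t \in `[- T, T] -> u' t = lambda *: u t) /\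
    (exists t, t \in `[- T, T] /\ u t != 0).

End Defs.

(* Main.v *)
Require Import Defs.
From HB Require Import structures.
From mathcomp Require Import all_boot all_order all_algebra.
From mathcomp Require Import all_classical all_reals.
From mathcomp Require Import topology normedtype.
From mathcomp Require Import complex.
From mathcomp Require Import ring lra.
From mathcomp Require Import sequences derive realfun exp trigo.
Import Order.TTheory GRing.Theory Num.Theory.
Import numFieldTopology.Exports numFieldNormedType.Exports.
Local Open Scope ring_scope.
Local Open Scope classical_set_scope.

Section Anal.
Variable R : realType.
Local Notation C := (complex R).
Local Notation Re := (@complex.Re R).
Local Notation Im := (@complex.Im R).

Lemma normC_real (x : R) : `|x%:C%C| = (`|x|)%:C%C :> C.
Proof. by rewrite normc_def /= expr0n addr0 sqrtr_sqr. Qed.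

Lemma cvg_RC {T} {F : set_system T} {FF : Filter F} (f : T -> R) (l : R) :
  f @ F --> l -> (fun t => (f t)%:C%C : C) @ F --> (l%:C%C : C).
Proof.
move/(@cvgrPdist_lt _ R^o _ _ FF) => H; apply/(@cvgrPdist_lt _ C^o _ _ FF) => e e0.
have e0' : 0 < Re e by move: e0; rewrite ltcE => /andP[_].
have eE : e = (Re e)%:C%C.
  move: e0; rewrite ltcE => /andP[/eqP /= E _]. case: e E {e0'}. move=> a b /= ->. done.
near=> t; rewrite -rmorphB normC_real eE ltcR.
by near: t; exact: H.
Unshelve. all: by end_near. Qed.

Lemma Re_le_norm (z : C) : `|Re z| <= Num.sqrt (Re z ^+ 2 + Im z ^+ 2).
Proof. by rewrite -sqrtr_sqr ler_wsqrtr // lerDl sqr_ge0. Qed.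

Lemma Im_le_norm (z : C) : `|Im z| <= Num.sqrt (Re z ^+ 2 + Im z ^+ 2).
Proof. by rewrite -sqrtr_sqr ler_wsqrtr // lerDr sqr_ge0. Qed.

Lemma cvg_Re {T} {F : set_system T} {FF : Filter F} (f : T -> C) (l : C) :
  f @ F --> l -> (fun t => Re (f t)) @ F --> Re l.
Proof.
move/(@cvgrPdist_lt _ C^o _ _ FF) => H; apply/(@cvgrPdist_lt _ R^o _ _ FF) => e e0.
have e0' : 0 < (e%:C%C : C) by rewrite ltcR.
near=> t; rewrite -raddfB /=.
apply: le_lt_trans (Re_le_norm _) _.
have : `|l - f t| < e%:C%C by near: t; exact: H.
by rewrite normc_def ltcR.
Unshelve. all: by end_near. Qed.

Lemma cvg_Im {T} {F : set_system T} {FF : Filter F} (f : T -> C) (l : C) :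
  f @ F --> l -> (fun t => Im (f t)) @ F --> Im l.
Proof.
move/(@cvgrPdist_lt _ C^o _ _ FF) => H; apply/(@cvgrPdist_lt _ R^o _ _ FF) => e e0.
have e0' : 0 < (e%:C%C : C) by rewrite ltcR.
near=> t; rewrite -raddfB /=.
apply: le_lt_trans (Im_le_norm _) _.
have : `|l - f t| < e%:C%C by near: t; exact: H.
by rewrite normc_def ltcR.
Unshelve. all: by end_near. Qed.

Lemma cvg_entry {T} {F : set_system T} {FF : Filter F} k
  (f : T -> 'cV[C]_k) (l : 'cV[C]_k) i :
  f @ F --> l -> (fun t => f t i 0) @ F --> l i 0.
Proof.
move=> H; apply: (@continuous_cvg _ _ _ _ FF f (fun M : 'cV[C]_k => M i 0) _ _ H).
exact: coord_continuous.
Qed.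


Lemma is_derive_lin (a t : R) : is_derive t (1:R) (fun s : R => a * s) a.
Proof.
have := @is_deriveZ R R R id a t 1 1 (is_derive_id t 1).
by rewrite [a%:A]mulr1.
Qed.

Lemma is_derive_pe (a b t : R) : is_derive t 1 (fun s => expR (a * s) * cos (b * s))
  (a * (expR (a * t) * cos (b * t)) - b * (expR (a * t) * sin (b * t))).
Proof.
have h2 : is_derive t (1:R) (fun s : R => expR (a * s)) (expR (a * t) * a).
  exact: (@is_derive1_comp _ expR (fun s => a * s) _ _ _ _ (is_derive_lin a t)).
have h3 : is_derive t (1:R) (fun s : R => cos (b * s)) (- sin (b * t) * b).
  exact: (@is_derive1_comp _ cos (fun s => b * s) _ _ _ _ (is_derive_lin b t)).
move: (is_deriveM h2 h3) => H; apply: (is_derive_eq H).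
rewrite /GRing.scale /=; ring.
Qed.

Lemma is_derive_qe (a b t : R) : is_derive t 1 (fun s => expR (a * s) * sin (b * s))
  (a * (expR (a * t) * sin (b * t)) + b * (expR (a * t) * cos (b * t))).
Proof.
have h2 : is_derive t (1:R) (fun s : R => expR (a * s)) (expR (a * t) * a).
  exact: (@is_derive1_comp _ expR (fun s => a * s) _ _ _ _ (is_derive_lin a t)).
have h3 : is_derive t (1:R) (fun s : R => sin (b * s)) (cos (b * t) * b).
  exact: (@is_derive1_comp _ sin (fun s => b * s) _ _ _ _ (is_derive_lin b t)).
move: (is_deriveM h2 h3) => H; apply: (is_derive_eq H).
rewrite /GRing.scale /=; ring.
Qed.


Definition ex (z : C) (t : R) : C :=
  ((expR (Re z * t) * cos (Im z * t)) +i* (expR (Re z * t) * sin (Im z * t)))%C.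
Definition dqC (f : R -> C) (t s : R) : C := ((s - t)^-1)%:C%C * (f s - f t).
Definition dqR (f : R -> R) (t s : R) : R := (s - t)^-1 * (f s - f t).

Lemma cplxE (x y : R) : (x +i* y)%C = x%:C%C + 'i%C * y%:C%C :> C.
Proof. by apply/eqP; rewrite eq_complex /= !(mul0r, mulr0, mul1r, subr0, add0r, addr0) !eqxx. Qed.

Lemma cvg_cplx {T} {F : set_system T} {FF : Filter F} (f g : T -> R) (a b : R) :
  f @ F --> a -> g @ F --> b ->
  (fun t => (f t +i* g t)%C : C) @ F --> ((a +i* b)%C : C).
Proof.
move=> fa gb.
have -> : (fun t => (f t +i* g t)%C : C) = (fun t => (f t)%:C%C + 'i%C * (g t)%:C%C).
  by apply: funext => t; rewrite cplxE.
rewrite cplxE; apply: (@cvgD _ C^o); first exact: cvg_RC.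
apply: (@cvgM C); first exact: cvg_cst.
exact: cvg_RC.
Qed.


Lemma ex_deriv z t : dqC (ex z) t @ t^' --> z * ex z t.
Proof.
have [gp [gpE gpc gpt]] := proj1 (is_derive1_caratheodory _ _ _) (is_derive_pe (Re z) (Im z) t).
have [gq [gqE gqc gqt]] := proj1 (is_derive1_caratheodory _ _ _) (is_derive_qe (Re z) (Im z) t).
have E : {near t^', (fun s => (gp s +i* gq s)%C : C) =1 dqC (ex z) t}.
  near=> s.
  have st : s - t != 0.
    rewrite subr_eq0; near: s.
    by rewrite near_withinE; near=> s0 => /=.
  rewrite /dqC /ex.
  have -> : ((expR (Re z * s) * cos (Im z * s)) +i* (expR (Re z * s) * sin (Im z * s)))%C -
            ((expR (Re z * t) * cos (Im z * t)) +i* (expR (Re z * t) * sin (Im z * t)))%C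
          = ((gp s * (s - t)) +i* (gq s * (s - t)))%C :> C.
    by rewrite -gpE -gqE.
  apply/eqP; rewrite eq_complex /= !(mul0r, subr0, addr0, add0r).
  by rewrite (mulrCA _ (gp s)) (mulrCA _ (gq s)) !mulVf // !mulr1 !eqxx.
apply: cvg_trans (near_eq_cvg E) _.
have -> : z * ex z t = (gp t +i* gq t)%C.
  rewrite gpt gqt; clear E gpE gqE gpc gqc gpt gqt.
  by case: z => x y; rewrite /ex /=; apply/eqP; rewrite eq_complex /= !eqxx.
apply: cvg_cplx.
- exact/(continuous_withinNx _ _).1.
- exact/(continuous_withinNx _ _).1.
Unshelve. all: by end_near. Qed.


Lemma ex0 z : ex z 0 = 1.
Proof.
by rewrite /ex !mulr0 expR0 cos0 sin0 mulr1 mulr0.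
Qed.

Lemma exN z t : ex z t * ex (- z) t = 1.
Proof.
case: z => x y; rewrite /ex /= !mulNr expRN cosN sinN.
have E0 : expR (x * t) != 0 by rewrite gt_eqF // expR_gt0.
have cs := cos2Dsin2 (y * t).
apply/eqP; rewrite eq_complex /=; apply/andP; split; apply/eqP.
- rewrite -cs; field; exact: E0.
- field; exact: E0.
Qed.

Lemma ex_conj z t : ex (- conjc z) t = conjc (ex z (- t)).
Proof.
by case: z => x y; rewrite /ex /=; apply/eqP; rewrite eq_complex /= (opprK y) (mulNr x t) (mulrN x t) (mulrN y t) cosN sinN mulrN !eqxx /=; apply/eqP; rewrite (opprK (expR (- (x * t)) * sin (y * t))).
Qed.


End Anal.

Section Anal2.
Variable R : realType.
Local Notation C := (complex R).
Local Notation Re := (@complex.Re R).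
Local Notation Im := (@complex.Im R).
Local Notation dqC := (@dqC R).
Local Notation dqR := (@dqR R).
Lemma dqC_cont (G : set_system R) {FG : Filter G} (f : R -> C) (t : R) (l : C) :
  G (fun s => s != t) -> (fun s => s) @ G --> t ->
  dqC f t @ G --> l -> f @ G --> f t.
Proof.
move=> Gne Gid Hd.
have E : {near G, (fun s => f t + ((s - t)%:C%C : C) * dqC f t s) =1 f}.
  near=> s.
  have st : s - t != 0 by rewrite subr_eq0; near: s; exact: Gne.
  rewrite /dqC mulrA -rmorphM /= mulfV // mul1r.
  by rewrite addrC subrK.
apply: cvg_trans (near_eq_cvg E) _.
have h0 : (fun s => ((s - t)%:C%C : C)) @ G --> (((t - t)%:C%C) : C).
  apply: cvg_RC; apply: (@cvgB _ R^o) => //; exact: cvg_cst.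
rewrite subrr rmorph0 in h0.
suff H : (fun s => f t + ((s - t)%:C%C : C) * dqC f t s) @ G --> f t + 0 * l.
  by rewrite mul0r addr0 in H.
apply: (@cvgD _ C^o); first exact: cvg_cst.
exact: (@cvgM C _ G FG _ _ _ _ h0 Hd).
Unshelve. all: by end_near. Qed.

Lemma dqC_mul (G : set_system R) {FG : Filter G} (f g : R -> C) (t : R) (f' g' : C) :
  f @ G --> f t -> dqC f t @ G --> f' -> dqC g t @ G --> g' ->
  dqC (fun s => f s * g s) t @ G --> f' * g t + f t * g'.
Proof.
move=> fc df dg.
have -> : dqC (fun s => f s * g s) t = (fun s => dqC f t s * g t + f s * dqC g t s).
  by apply: funext => s; rewrite /dqC; ring.
apply: (@cvgD _ C^o).
- exact: (@cvgM C _ G FG _ _ _ _ df (cvg_cst (g t))).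
- exact: (@cvgM C _ G FG _ _ _ _ fc dg).
Qed.

Lemma Re_realM (r : R) (z : C) : Re (r%:C%C * z) = r * Re z.
Proof. by case: z => x y /=; rewrite mul0r subr0. Qed.
Lemma Im_realM (r : R) (z : C) : Im (r%:C%C * z) = r * Im z.
Proof. by case: z => x y /=; rewrite mul0r addr0. Qed.

Lemma dqC_Re (G : set_system R) {FG : Filter G} (f : R -> C) (t : R) (l : C) :
  dqC f t @ G --> l -> dqR (fun s => Re (f s)) t @ G --> Re l.
Proof.
move/cvg_Re; apply: cvg_trans; apply: near_eq_cvg; apply: filterE => s.
by rewrite /dqC /dqR Re_realM raddfB.
Qed.

Lemma dqC_Im (G : set_system R) {FG : Filter G} (f : R -> C) (t : R) (l : C) :
  dqC f t @ G --> l -> dqR (fun s => Im (f s)) t @ G --> Im l.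
Proof.
move/cvg_Im; apply: cvg_trans; apply: near_eq_cvg; apply: filterE => s.
by rewrite /dqC /dqR Im_realM raddfB.
Qed.

End Anal2.

Section W.
Variable R : realType.
Local Notation dqR := (@dqR R).
Lemma W_filter (I : set R) (t : R) : Filter (within I (nbhs t^')).
Proof. exact: _. Qed.
Lemma W_ne (I : set R) (t : R) : within I (nbhs t^') (fun s => s != t).
Proof.
rewrite /within /=; near=> s => sI.
by near: s; rewrite near_withinE; near=> s0.
Unshelve. all: by end_near. Qed.

Lemma W_id (I : set R) (t : R) : (fun s => s) @ within I (nbhs t^') --> t.
Proof.
apply: cvg_trans (cvg_within I) _.
exact: cvg_within.
Qed.

Lemma W_of_dnbhs {V : topologicalType} (I : set R) (t : R) (f : R -> V) (l : V) :
  f @ t^' --> l -> f @ within I (nbhs t^') --> l.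
Proof. by move=> H; apply: cvg_trans H; apply: cvg_fmap2; exact: cvg_within. Qed.

Lemma W_cont {V : topologicalType} (I : set R) (x : R) (f : R -> V) :
  f @ within I (nbhs x^') --> f x -> f @ within I (nbhs x) --> f x.
Proof.
move=> H P /= Pfx.
have Px := nbhs_singleton Pfx.
have := H P Pfx; rewrite /= /within /=.
move=> Hs. have Hs2 : nbhs x (fun s => s != x -> I s -> P (f s)) := Hs. change (nbhs x (fun s => I s -> P (f s))). apply: filterS Hs2 => s Hs0 Is. by case: (eqVneq s x) => [->//|sx]; apply: Hs0.
Qed.

Lemma dqR_cont (G : set_system R) {FG : Filter G} (f : R -> R) (t : R) (l : R) :
  G (fun s => s != t) -> (fun s => s) @ G --> t ->
  dqR f t @ G --> l -> f @ G --> f t.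
Proof.
move=> Gne Gid Hd.
have E : {near G, (fun s => f t + (s - t) * dqR f t s) =1 f}.
  near=> s.
  have st : s - t != 0 by rewrite subr_eq0; near: s; exact: Gne.
  rewrite /dqR mulrA mulfV // mul1r.
  by rewrite addrC subrK.
apply: cvg_trans (near_eq_cvg E) _.
have h0 : (fun s => s - t) @ G --> t - t.
  apply: (@cvgB _ R^o) => //; exact: cvg_cst.
rewrite subrr in h0.
suff H : (fun s => f t + (s - t) * dqR f t s) @ G --> f t + 0 * l.
  by rewrite mul0r addr0 in H.
apply: (@cvgD _ R^o); first exact: cvg_cst.
exact: (@cvgM R _ G FG _ _ _ _ h0 Hd).
Unshelve. all: by end_near. Qed.

Lemma real_const (f : R -> R) (a b : R) : a <= b ->
  (forall t, t \in `[a, b] ->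
     dqR f t @ within [set s | s \in `[a, b]] (nbhs t^') --> 0) ->
  forall t, t \in `[a, b] -> f t = f a.
Proof.
move=> ab H t tab.
have /andP[a_t tb] : (a <= t) && (t <= b) by move: (tab); rewrite inE /= in_itv.
pose I := [set s | s \in `[a, b]].
have cont : {within `[a, t], continuous f}.
  apply: (@continuous_subspaceW _ _ _ I).
    move=> s /=; rewrite !in_itv /= => /andP[as0 st].
    rewrite /I /= inE /= in_itv /= as0 /=; exact: le_trans st tb.
  apply/subspace_continuousP => x xI.
  apply: W_cont; apply: (@dqR_cont _ _ f x 0 (W_ne _ _) (W_id _ _)).
  exact: H.
have der : forall x, x \in `]a, t[%R -> is_derive x 1 f 0.
  move=> x xat.
  have xab : x \in `]a, b[%R.
    move: xat; rewrite !in_itv /= => /andP[-> xt] /=; exact: lt_le_trans xt tb.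
  have xI : x \in `[a, b].
    by move: xab; rewrite inE /= !in_itv /= => /andP[ax xb]; rewrite !ltW.
  apply/is_derive1_caratheodory.
  exists (fun z => if z == x then 0 else dqR f x z); split.
  - move=> z; case: eqVneq => [->|zx]; first by rewrite !subrr mulr0.
    by rewrite /dqR mulrAC mulVf ?mul1r // subr_eq0.
  - apply/continuous_withinNx; rewrite eqxx.
    move=> P /(H x xI) HP.
    have HP2 : nbhs x (fun s => s != x -> I s -> P (dqR f x s)) := HP.
    change (nbhs x (fun s => s != x -> P (if s == x then 0 else dqR f x s))).
    have Hin := near_in_itvoo xab.
    apply: filterS2 HP2 Hin => s HPs sab sx.
    rewrite (negbTE sx); apply: HPs => //.
    by move: sab; rewrite /I /= inE /= !in_itv /= => /andP[ax xb]; rewrite !ltW.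
  - by rewrite eqxx.
have [c _ E] := @MVT_segment R f (fun _ => 0) a t a_t der cont.
by apply/eqP; rewrite -subr_eq0 E mul0r.
Qed.
End W.

Section MatPart.
Variable R : realType.
Local Notation C := (complex R).
Variable n : nat.

Definition JR : 'M[R]_(n + n) := block_mx 0 1%:M (- 1%:M) 0.
Definition psiR (M : 'M[R]_(n + n)) := (JR^T *m M^T) *m JR.

Lemma psiR_block (X Y Z W : 'M[R]_n) :
  psiR (block_mx X Y Z W) = block_mx W^T (- Y^T) (- Z^T) X^T.
Proof.
rewrite /psiR /JR !tr_block_mx !mulmx_block.
have trN (M : 'M[R]_n) : (- M)^T = - M^T by apply/matrixP => i j; rewrite !mxE.
rewrite !(trmx0, trN, trmx1).
rewrite !(mulNmx, mulmxN, mul1mx, mulmx1, mul0mx, mulmx0, add0r, addr0, opprK). by rewrite subr0.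
Qed.

Lemma psiR_Mpos (Ai : 'M[R]_n) : psiR (Mpos Ai) = - Mneg Ai.
Proof.
by rewrite /Mpos /Mneg psiR_block opp_block_mx !trmx0 !oppr0 opprK.
Qed.

Lemma psiR_Mneg (Ai : 'M[R]_n) : psiR (Mneg Ai) = - Mpos Ai.
Proof.
by rewrite /Mpos /Mneg psiR_block opp_block_mx !trmx0 !oppr0 linearN /= trmxK.
Qed.

Lemma Dxi_sym nu ny (D : 'M[R]_(ny, nu)) xi : (invmx (Dxi D xi))^T = invmx (Dxi D xi).
Proof.
rewrite trmx_inv /Dxi linearB /= tr_scalar_mx trmx_mul trmxK //.
Qed.

Lemma Dtilxi_sym nu ny (D : 'M[R]_(ny, nu)) xi : (invmx (Dtilxi D xi))^T = invmx (Dtilxi D xi).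
Proof.
rewrite trmx_inv /Dtilxi linearB /= tr_scalar_mx trmx_mul trmxK //.
Qed.

Lemma psiR_M0 nu ny A0 (B : 'M[R]_(n, nu)) (Cm : 'M[R]_(ny, n)) D xi :
  psiR (M0 A0 B Cm D xi) = - M0 A0 B Cm D xi.
Proof.
rewrite /M0 psiR_block opp_block_mx.
congr block_mx.
- rewrite linearD /= linearN /= trmxK !trmx_mul !trmxK Dxi_sym.
  by rewrite opprB addrC !mulmxA.
- by rewrite linearN /= !trmx_mul trmxK Dxi_sym mulmxA.
- by rewrite linearZ /= !trmx_mul trmxK Dtilxi_sym mulmxA.
- by rewrite linearB /= !trmx_mul trmxK Dxi_sym opprD opprK !mulmxA addrC.
Qed.


Definition JC : 'M[C]_(n + n) := cmx JR.
Definition psiC (M : 'M[C]_(n + n)) := (JC^T *m M^T) *m JC.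

Lemma psiC_cmx (M : 'M[R]_(n + n)) : psiC (cmx M) = cmx (psiR M).
Proof. by rewrite /psiC /psiR /JC /cmx !map_mxM !map_trmx. Qed.

Lemma psiC_D (M N : 'M[C]_(n + n)) : psiC (M + N) = psiC M + psiC N.
Proof. by rewrite /psiC linearD /= mulmxDr mulmxDl. Qed.

Lemma psiC_N (M : 'M[C]_(n + n)) : psiC (- M) = - psiC M.
Proof.
rewrite /psiC.
have -> : (- M)^T = - M^T by apply/matrixP => i j; rewrite !mxE.
by rewrite mulmxN mulNmx.
Qed.

Lemma psiC_Z c (M : 'M[C]_(n + n)) : psiC (c *: M) = c *: psiC M.
Proof. by rewrite /psiC linearZ /= -scalemxAr -scalemxAl. Qed.

Lemma psiC_sum k (F : 'I_k -> 'M[C]_(n + n)) :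
  psiC (\sum_(i < k) F i) = \sum_(i < k) psiC (F i).
Proof.
elim/big_rec2: _ => [|i y1 y2 _ <-]; last by rewrite psiC_D.
by rewrite /psiC trmx0 mulmx0 mul0mx.
Qed.

Lemma JRTJR : JR^T *m JR = 1%:M.
Proof.
rewrite /JR tr_block_mx mulmx_block (scalar_mx_block n n).
have trN (M : 'M[R]_n) : (- M)^T = - M^T by apply/matrixP => i j; rewrite !mxE.
rewrite !(trmx0, trN, trmx1).
rewrite !(mulNmx, mulmxN, mul1mx, mulmx1, mul0mx, mulmx0, add0r, addr0, opprK). by rewrite oppr0.
Qed.

Lemma psiC_scalar c : psiC (c%:M) = c%:M.
Proof.
rewrite /psiC tr_scalar_mx -scalemx1 -scalemxAr mulmx1 -scalemxAl.
by rewrite /JC /cmx map_trmx -map_mxM JRTJR map_mx1 scalemx1.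
Qed.


Variables (m nu ny : nat) (A0 : 'M[R]_n) (A : 'I_m -> 'M[R]_n) (B : 'M[R]_(n, nu))
  (Cm : 'M[R]_(ny, n)) (D : 'M[R]_(ny, nu)) (xi : R).

Definition Pm (l : C) (a b : 'I_m -> C) : 'M[C]_(n + n) :=
  l%:M - cmx (M0 A0 B Cm D xi)
  - \sum_(i < m) (a i *: cmx (Mpos (A i)) + b i *: cmx (Mneg (A i))).

Lemma cmxN (M : 'M[R]_(n + n)) : cmx (- M) = - cmx M.
Proof. by apply/matrixP => i j; rewrite !mxE raddfN. Qed.

Lemma psiC_Pm l a b : psiC (Pm l a b) = - Pm (- l) b a.
Proof.
rewrite /Pm !psiC_D !psiC_N psiC_sum psiC_scalar psiC_cmx psiR_M0 cmxN opprK.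
under eq_bigr => i _ do rewrite psiC_D !psiC_Z !psiC_cmx psiR_Mpos psiR_Mneg !cmxN.
have -> : \sum_(i < m) (a i *: - cmx (Mneg (A i)) + b i *: - cmx (Mpos (A i))) =
  - \sum_(i < m) (b i *: cmx (Mpos (A i)) + a i *: cmx (Mneg (A i))).
  by rewrite -sumrN; apply: eq_bigr => i _; rewrite !scalerN opprD addrC.
by rewrite !opprD !opprK raddfN opprK.
Qed.

Lemma cmx_conj (M : 'M[R]_(n + n)) : map_mx conjc (cmx M) = cmx M.
Proof. by apply/matrixP => i j; rewrite !mxE conjc_real. Qed.

Lemma conj_Pm l a b :
  map_mx conjc (Pm l a b) = Pm (conjc l) (conjc \o a) (conjc \o b).
Proof.
rewrite /Pm !map_mxB map_scalar_mx cmx_conj map_mx_sum.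
congr (_ - _); apply: eq_bigr => i _.
by rewrite map_mxD !map_mxZ !cmx_conj.
Qed.

Lemma det_Pm l a b : \det (Pm l a b) = 0 ->
  \det (Pm (- conjc l) (conjc \o b) (conjc \o a)) = 0.
Proof.
move=> P0.
have -> : Pm (- conjc l) (conjc \o b) (conjc \o a) =
          - psiC (map_mx conjc (Pm l a b)).
  by rewrite conj_Pm psiC_Pm opprK.
rewrite -scaleN1r detZ /psiC !det_mulmx det_tr det_tr (det_map_mx conjc) P0.
by rewrite rmorph0 !(mulr0, mul0r).
Qed.

End MatPart.

Arguments cvg_entry {R T F FF k f l}.
Arguments ex_deriv {R}.
Arguments ex0 {R}.
Arguments exN {R}.
Arguments ex_conj {R}.
Arguments dqC_cont {R G FG f t l}.
Arguments dqC_mul {R G FG f g t f' g'}.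
Arguments dqC_Re {R G FG f t l}.
Arguments dqC_Im {R G FG f t l}.
Arguments W_of_dnbhs {R V I t f l}.
Arguments real_const {R f a b}.
Section U.
Variable R : realType.
Local Notation C := (complex R).
Local Notation Re := (@complex.Re R).
Local Notation Im := (@complex.Im R).
Local Notation dqC := (@dqC R).
Local Notation dqR := (@dqR R).
Local Notation ex := (@ex R).

Lemma ex_cont (z : C) (s : R) : ex z @ s^' --> ex z s.
Proof.
apply: (@dqC_cont R _ _ (ex z) s (z * ex z s)); last exact: ex_deriv.
- by near=> s0; near: s0; rewrite near_withinE; near=> s1.
- exact: cvg_within.
Unshelve. all: by end_near. Qed.

Lemma uniq_exp k (T : R) (u u' : R -> 'cV[C]_k) (l : C) : 0 <= T ->
  has_deriv_on (- T) T u u' ->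
  (forall t, t \in `[- T, T] -> u' t = l *: u t) ->
  forall t, t \in `[- T, T] -> u t = ex l t *: u 0.
Proof.
move=> T0 Hd Heq t tI; apply/matrixP => i j; rewrite (ord1 j) [RHS]mxE.
pose v := fun s => u s i 0.
have I0 : (0:R) \in `[- T, T] by rewrite inE /= in_itv /= oppr_le0 T0.
have dv : forall s, s \in `[- T, T] ->
    dqC v s @ within [set s | s \in `[- T, T]] (nbhs s^') --> l * v s.
  move=> s sI; have H := cvg_entry i (Hd s sI).
  rewrite Heq // mxE in H.
  have E : {near within [set s | s \in `[- T, T]] (nbhs s^'),
     (fun s0 => (((s0 - s)^-1)%:C%C *: (u s0 - u s)) i 0) =1 dqC v s}.
    by apply: filterE => s0; rewrite /dqC /v !mxE.
  exact: (cvg_trans (near_eq_cvg E) (H (W_filter _ _ _))).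
pose G := fun s => ex (- l) s * v s.
have dG : forall s, s \in `[- T, T] ->
    dqC G s @ within [set s | s \in `[- T, T]] (nbhs s^') --> 0.
  move=> s sI.
  have H1 := dqC_mul (W_of_dnbhs (ex_cont (- l) s)) (W_of_dnbhs (ex_deriv (- l) s)) (dv s sI).
  have {}H1 := H1 (W_filter _ _ _).
  have E0 : - l * ex (- l) s * v s + ex (- l) s * (l * v s) = 0 by ring.
  by rewrite E0 in H1.
have TT : - T <= T by rewrite -subr_ge0 opprK addr_ge0.
have cRe := real_const TT (fun s sI => dqC_Re (FG := W_filter _ _ _) (dG s sI)).
have cIm := real_const TT (fun s sI => dqC_Im (FG := W_filter _ _ _) (dG s sI)).
have GtG0 : G t = G 0.
  apply/eqP; rewrite eq_complex.
  by rewrite (cRe _ tI) (cRe _ I0) (cIm _ tI) (cIm _ I0) !eqxx.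
have G0 : G 0 = v 0 by rewrite /G ex0 mul1r.
have -> : u t i 0 = ex l t * G t.
  by rewrite /G mulrA exN mul1r.
by rewrite GtG0 G0.
Qed.
End U.

Arguments ex_deriv {R}.
Arguments ex0 {R}.
Arguments exN {R}.
Arguments ex_conj {R}.
Arguments W_of_dnbhs {R V I t f l}.
Arguments Pm {R n m nu ny}.
Arguments det_Pm {R n m nu ny}.
Arguments uniq_exp {R k T u u' l}.
Arguments ex_cont {R}.

Section Main.
Variable R : realType.
Local Notation C := (complex R).
Local Notation ex := (@ex R).
Local Notation dqC := (@dqC R).

Lemma Pm_mul n m nu ny A0 (A : 'I_m -> 'M[R]_n) (B : 'M[R]_(n, nu)) (Cm : 'M[R]_(ny, n)) D xi
  (l : C) a b (y : 'cV[C]_(n + n)) :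
  Pm A0 A B Cm D xi l a b *m y = l *: y - (cmx (M0 A0 B Cm D xi) *m y
     + \sum_(i < m) (cmx (Mpos (A i)) *m (a i *: y) + cmx (Mneg (A i)) *m (b i *: y))).
Proof.
rewrite /Pm !mulmxBl mul_scalar_mx mulmx_suml opprD addrA; congr (_ - _).
apply: eq_bigr => i _; rewrite mulmxDl -!scalemxAl -!scalemxAr //.
Qed.

Lemma det_of_ker k (M : 'M[C]_k) (y : 'cV[C]_k) : y != 0 -> M *m y = 0 -> \det M = 0.
Proof.
move=> y0 My; rewrite -det_tr; apply/eqP/det0P; exists y^T.
  by apply: contra y0 => /eqP/(congr1 trmx); rewrite trmxK trmx0 => ->.
by rewrite -trmx_mul My trmx0.
Qed.

Lemma ker_of_det k (M : 'M[C]_k) : \det M = 0 -> exists2 y : 'cV[C]_k, y != 0 & M *m y = 0.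
Proof.
rewrite -det_tr => /eqP/det0P [v v0 vM]; exists v^T.
  by apply: contra v0 => /eqP/(congr1 trmx); rewrite trmxK trmx0 => ->.
by rewrite -[M]trmxK -trmx_mul vM trmx0.
Qed.

Lemma taumax_ge0 m (tau : 'I_m -> R) : 0 <= taumax tau.
Proof. exact: bigmax_ge_id. Qed.

Lemma tau_le m (tau : 'I_m -> R) i : tau i <= taumax tau.
Proof. exact: le_bigmax. Qed.


Lemma eig_dir (n m nu ny : nat)
  (A0 : 'M[R]_n) (A : 'I_m -> 'M[R]_n) (B : 'M[R]_(n, nu))
  (Cm : 'M[R]_(ny, n)) (D : 'M[R]_(ny, nu)) (tau : 'I_m -> R) (xi : R) :
  (forall i, 0 <= tau i) ->
  forall lambda : C,
    is_eigenvalue A0 A B Cm D tau xi lambda ->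
    is_eigenvalue A0 A B Cm D tau xi (- (conjc lambda)).
Proof.
move=> tau0 l [u [u' [uc [u'c [Hd [Hb [Heq [t0 [t0I ut0]]]]]]]]].
have T0 := taumax_ge0 _ tau.
set T := taumax tau in Hd Heq t0I *.
have I0 : (0:R) \in `[- T, T] by rewrite inE /= in_itv /= oppr_le0 T0.
have tauI i : tau i \in `[- T, T].
  rewrite inE /= in_itv /= tau_le andbT.
  by rewrite (le_trans _ (tau0 i)) // oppr_le0.
have tauNI i : - tau i \in `[- T, T].
  rewrite inE /= in_itv /= lerN2 tau_le /=.
  by rewrite (le_trans _ T0) // oppr_le0.
have uE := uniq_exp T0 Hd Heq.
have u00 : u 0 != 0.
  apply: contra ut0 => /eqP u0; rewrite (uE _ t0I) u0 scaler0 //.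
pose a := fun i => ex l (- tau i).
pose b := fun i => ex l (tau i).
have HP : Pm A0 A B Cm D xi l a b *m u 0 = 0.
  rewrite Pm_mul; apply/eqP; rewrite subr_eq0; apply/eqP.
  rewrite -(Heq 0 I0) Hb; congr (_ + _); apply: eq_bigr => i _.
  by rewrite (uE _ (tauI i)) (uE _ (tauNI i)).
have [x x0 Px] := ker_of_det _ _ (det_Pm A0 A B Cm D xi l a b (det_of_ker _ _ _ u00 HP)).
set mu := - conjc l.
exists (fun t => ex mu t *: x), (fun t => ex mu t *: (mu *: x)).
have exc : forall t, {for t, continuous (ex mu)}.
  by move=> t; apply/continuous_withinNx; exact: ex_cont.
split.
  by apply: continuous_subspaceT => t; exact: continuousZl (exc t).
split.
  by apply: continuous_subspaceT => t; exact: continuousZl (exc t).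
split.
  move=> t tI.
  have H := W_of_dnbhs (I := [set s | s \in `[- T, T]]) (ex_deriv mu t).
  have H2 := cvgZl (a := x) H.
  rewrite scalerA mulrC.
  have {}H2 := H2 (W_filter _ _ _).
  have E : {near within [set s | s \in `[- T, T]] (nbhs t^'),
      (fun s => dqC (ex mu) t s *: x) =1
      (fun s => ((s - t)^-1)%:C%C *: (ex mu s *: x - ex mu t *: x))}.
    by apply: filterE => s; rewrite /dqC -scalerBl scalerA.
  exact: (cvg_trans (near_eq_cvg E) H2).
split.
  rewrite ex0 scale1r scale1r.
  move: Px; rewrite Pm_mul => /eqP; rewrite subr_eq0 => /eqP ->.
  congr (_ + _); apply: eq_bigr => i _.
  by rewrite /mu !ex_conj opprK.
split.
  by move=> t _; rewrite !scalerA mulrC.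
exists 0; split => //.
by rewrite ex0 scale1r.
Qed.

End Main.

Theorem proposition1 (R : realType) (n m nu ny : nat)
  (A0 : 'M[R]_n) (A : 'I_m -> 'M[R]_n) (B : 'M[R]_(n, nu))
  (Cm : 'M[R]_(ny, n)) (D : 'M[R]_(ny, nu)) (tau : 'I_m -> R) (xi : R) :
  (0 < n)%N -> (0 < m)%N -> (0 < nu)%N -> (0 < ny)%N ->
  (forall i, 0 <= tau i) ->
  0 < xi ->
  Dxi D xi \in unitmx ->
  forall lambda : complex R,
    is_eigenvalue A0 A B Cm D tau xi lambda <->
    is_eigenvalue A0 A B Cm D tau xi (- (conjc lambda)).
Proof.
move=> _ _ _ _ tau0 _ _ l; split; first exact: eig_dir.
move=> H; have := @eig_dir R n m nu ny A0 A B Cm D tau xi tau0 _ H.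
by rewrite raddfN /= conjcK opprK.
Qed.
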